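(* For an integer $d\ge 2$ and density matrices $\rho,\sigma$ on $\mathbb{C}^d$, let $$\mathcal{F}_C^{(d)}(\rho,\sigma)=\frac{1-r}{2}+\frac{1+r}{2}\left[\operatorname{tr}(\rho\sigma)+\sqrt{1-\operatorname{tr}(\rho^2)}\sqrt{1-\operatorname{tr}(\sigma^2)}\right],\qquad r=\frac{1}{d-1}.$$ Then for all integers $d_1,d_2\ge 2$, all density matrices $\rho_1,\sigma_1$ on $\mathbb{C}^{d_1}$ and $\rho_2,\sigma_2$ on $\mathbb{C}^{d_2}$, $$\mathcal{F}_C^{(d_1d_2)}(\rho_1\otimes\rho_2,\sigma_1\otimes\sigma_2)\ge\mathcal{F}_C^{(d_1)}(\rho_1,\sigma_1)\,\mathcal{F}_C^{(d_2)}(\rho_2,\sigma_2).$$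
   Context: A density matrix is a positive semidefinite matrix of unit trace. $\mathcal{F}_C$ is the fidelity of Chen et al., where $d$ is the dimension of the state space. *)

(* Defs.v *)
From HB Require Import structures.
From mathcomp Require Import all_boot all_order all_algebra.
From mathcomp Require Import complex mxtens.
Set Implicit Arguments. Unset Strict Implicit. Unset Printing Implicit Defensive.
Import Order.TTheory GRing.Theory Num.Theory.
Local Open Scope ring_scope.
Local Open Scope complex_scope.

Definition adjmx {C : numClosedFieldType} m n (A : 'M[C]_(m, n)) : 'M[C]_(n, m) :=
  map_mx Num.conj A^T.

Definition psd {C : numClosedFieldType} n (A : 'M[C]_n) : Prop :=
  adjmx A = A /\ forall x : 'cV[C]_n, 0 <= (adjmx x *m A *m x) 0 0.

Definition density {C : numClosedFieldType} n (A : 'M[C]_n) : Prop :=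
  psd A /\ \tr A = 1.

(* The fidelity F_C^{(d)} of Chen et al.; r = 1/(d-1).
   Its value is real for density matrices; it lives in C and is compared
   with the (partial) order of C, which on reals is the usual order. *)
Definition fidC {C : numClosedFieldType} (d : nat) (rho sigma : 'M[C]_d) : C :=
  let r := ((d.-1)%:R)^-1 in
  (1 - r) / 2%:R + (1 + r) / 2%:R *
    (\tr (rho *m sigma)
     + sqrtC (1 - \tr (rho *m rho)) * sqrtC (1 - \tr (sigma *m sigma))).

(* Main.v *)
Require Import Defs.
From HB Require Import structures.
From mathcomp Require Import all_boot all_order all_algebra.
From mathcomp Require Import complex mxtens.
From mathcomp Require Import sesquilinear spectral.
From mathcomp Require Import ring lra zify.
Set Implicit Arguments. Unset Strict Implicit. Unset Printing Implicit Defensive.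
Import Order.TTheory GRing.Theory Num.Theory.
Local Open Scope ring_scope.

Lemma sqrt_facts (R : rcfType) (p : R) : 0 <= p <= 1 ->
  [/\ 0 <= Num.sqrt p, 0 <= Num.sqrt (1 - p), Num.sqrt p ^+ 2 = p
    & Num.sqrt (1 - p) ^+ 2 = 1 - p].
Proof.
move=> /andP[h0 h1]; rewrite !sqrtr_ge0 !sqr_sqrtr //; lra.
Qed.

Lemma G_bounds (R : rcfType) (a p q : R) : 0 <= a -> 0 <= p <= 1 -> 0 <= q <= 1 ->
  a ^+ 2 <= p * q ->
  [/\ a <= Num.sqrt p * Num.sqrt q & 0 <= a + Num.sqrt (1 - p) * Num.sqrt (1 - q) <= 1].
Proof.
move=> ha hp hq hapq.
have [x0 x'0 x2 x'2] := sqrt_facts hp.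
have [y0 y'0 y2 y'2] := sqrt_facts hq.
have hxy : 0 <= Num.sqrt p * Num.sqrt q by rewrite mulr_ge0.
have haxy : a <= Num.sqrt p * Num.sqrt q.
  have e : (Num.sqrt p * Num.sqrt q) ^+ 2 = p * q by rewrite exprMn x2 y2.
  rewrite -e in hapq; nra.
split => //; apply/andP; split.
  by rewrite addr_ge0 // mulr_ge0.
have := sqr_ge0 (Num.sqrt p - Num.sqrt q).
have := sqr_ge0 (Num.sqrt (1 - p) - Num.sqrt (1 - q)).
nra.
Qed.

Lemma super_core (R : rcfType) (a1 a2 p1 p2 q1 q2 X1 X1' Y1 Y1' X2 X2' Y2 Y2' : R) :
  0 <= a1 -> 0 <= a2 -> 0 <= X1 -> 0 <= X1' -> 0 <= Y1 -> 0 <= Y1' ->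
  0 <= X2 -> 0 <= X2' -> 0 <= Y2 -> 0 <= Y2' ->
  X1 ^+ 2 = p1 -> X1' ^+ 2 = 1 - p1 -> Y1 ^+ 2 = q1 -> Y1' ^+ 2 = 1 - q1 ->
  X2 ^+ 2 = p2 -> X2' ^+ 2 = 1 - p2 -> Y2 ^+ 2 = q2 -> Y2' ^+ 2 = 1 - q2 ->
  a1 <= X1 * Y1 -> a2 <= X2 * Y2 ->
  (a1 + X1' * Y1') * (a2 + X2' * Y2')
  <= a1 * a2 + Num.sqrt (1 - p1 * p2) * Num.sqrt (1 - q1 * q2).
Proof.
move=> ha1 ha2 x10 x1'0 y10 y1'0 x20 x2'0 y20 y2'0 x12 x1'2 y12 y1'2 x22 x2'2 y22 y2'2 b1 b2.
pose W := X1 * X2' * (Y1 * Y2') + X1' * X2 * (Y1' * Y2) + X1' * X2' * (Y1' * Y2').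
have eU : 1 - p1 * p2 = (X1 * X2') ^+ 2 + (X1' * X2) ^+ 2 + (X1' * X2') ^+ 2.
  rewrite !exprMn x12 x22 x1'2 x2'2; ring.
have eV : 1 - q1 * q2 = (Y1 * Y2') ^+ 2 + (Y1' * Y2) ^+ 2 + (Y1' * Y2') ^+ 2.
  rewrite !exprMn y12 y22 y1'2 y2'2; ring.
have hW0 : 0 <= W by rewrite /W !addr_ge0 // !mulr_ge0.
have hUV : W ^+ 2 <= (1 - p1 * p2) * (1 - q1 * q2).
  rewrite eU eV -subr_ge0.
  have -> : ((X1 * X2') ^+ 2 + (X1' * X2) ^+ 2 + (X1' * X2') ^+ 2) *
    ((Y1 * Y2') ^+ 2 + (Y1' * Y2) ^+ 2 + (Y1' * Y2') ^+ 2) - W ^+ 2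
     = (X1 * X2' * (Y1' * Y2) - X1' * X2 * (Y1 * Y2')) ^+ 2
     + (X1 * X2' * (Y1' * Y2') - X1' * X2' * (Y1 * Y2')) ^+ 2
     + (X1' * X2 * (Y1' * Y2') - X1' * X2' * (Y1' * Y2)) ^+ 2.
    rewrite /W; ring.
  by rewrite !addr_ge0 // sqr_ge0.
have hU : 0 <= 1 - p1 * p2 by rewrite eU !addr_ge0 // sqr_ge0.
have hsq : W <= Num.sqrt (1 - p1 * p2) * Num.sqrt (1 - q1 * q2).
  rewrite -sqrtrM //.
  by rewrite -(ger0_norm hW0) -sqrtr_sqr ler_sqrt //; apply: le_trans hUV; rewrite sqr_ge0.
have hs1 : 0 <= X1' * Y1' by rewrite mulr_ge0.
have hs2 : 0 <= X2' * Y2' by rewrite mulr_ge0.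
have e1 : a1 * (X2' * Y2') <= X1 * Y1 * (X2' * Y2') by rewrite ler_wpM2r.
have e2 : a2 * (X1' * Y1') <= X2 * Y2 * (X1' * Y1') by rewrite ler_wpM2r.
have eW : W = X1 * Y1 * (X2' * Y2') + X2 * Y2 * (X1' * Y1') + X1' * Y1' * (X2' * Y2').
  rewrite /W; ring.
have eL : (a1 + X1' * Y1') * (a2 + X2' * Y2') = a1 * a2 + a1 * (X2' * Y2') + a2 * (X1' * Y1') + X1' * Y1' * (X2' * Y2').
  ring.
rewrite eL; lra.
Qed.

Lemma super_mult (R : rcfType) (a1 a2 p1 p2 q1 q2 : R) :
  0 <= a1 -> 0 <= a2 -> 0 <= p1 <= 1 -> 0 <= q1 <= 1 -> 0 <= p2 <= 1 -> 0 <= q2 <= 1 ->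
  a1 ^+ 2 <= p1 * q1 -> a2 ^+ 2 <= p2 * q2 ->
  (a1 + Num.sqrt (1 - p1) * Num.sqrt (1 - q1)) * (a2 + Num.sqrt (1 - p2) * Num.sqrt (1 - q2))
  <= a1 * a2 + Num.sqrt (1 - p1 * p2) * Num.sqrt (1 - q1 * q2).
Proof.
move=> ha1 ha2 hp1 hq1 hp2 hq2 h1 h2.
have [b1 _] := G_bounds ha1 hp1 hq1 h1.
have [b2 _] := G_bounds ha2 hp2 hq2 h2.
have [x10 x1'0 x12 x1'2] := sqrt_facts hp1.
have [y10 y1'0 y12 y1'2] := sqrt_facts hq1.
have [x20 x2'0 x22 x2'2] := sqrt_facts hp2.
have [y20 y2'0 y22 y2'2] := sqrt_facts hq2.
exact: (super_core ha1 ha2 x10 x1'0 y10 y1'0 x20 x2'0 y20 y2'0 x12 x1'2 y12 y1'2 x22 x2'2 y22 y2'2 b1 b2).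
Qed.

Lemma final_step (R : realFieldType) (b b1 b2 G G1 G2 : R) :
  0 <= b -> b <= b1 -> b <= b2 -> b1 <= 1 -> b2 <= 1 ->
  0 <= G1 <= 1 -> 0 <= G2 <= 1 -> G1 * G2 <= G ->
  ((1 - b1) + b1 * G1) * ((1 - b2) + b2 * G2) <= (1 - b) + b * G.
Proof.
move=> hb hb1 hb2 hb1' hb2' /andP[g1 g1'] /andP[g2 g2'] hG.
have h1 : 0 <= (b1 - b) * (1 - G1) * G2 by rewrite !mulr_ge0 // subr_ge0.
have h2 : 0 <= (b2 - b) * (1 - G2) * G1 by rewrite !mulr_ge0 // subr_ge0.
have h5 : 0 <= (b1 - b) + b2 * (1 - b1).
  by apply: addr_ge0; [rewrite subr_ge0 | rewrite mulr_ge0 // ?subr_ge0 //]; lra.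
have h3 : 0 <= ((b1 - b) + b2 * (1 - b1)) * (1 - G1) * (1 - G2).
  by rewrite !mulr_ge0 // subr_ge0.
have h4 : b * (G1 * G2) <= b * G by rewrite ler_wpM2l.
nra.
Qed.

Definition Fr (R : rcfType) (d : nat) (a p q : R) : R :=
  let r := ((d.-1)%:R)^-1 in
  (1 - r) / 2%:R + (1 + r) / 2%:R * (a + Num.sqrt (1 - p) * Num.sqrt (1 - q)).

Lemma Fr_form (R : rcfType) (d : nat) (a p q : R) :
  Fr d a p q = (1 - (1 + ((d.-1)%:R)^-1) / 2%:R) + (1 + ((d.-1)%:R)^-1) / 2%:R *
      (a + Num.sqrt (1 - p) * Num.sqrt (1 - q)).
Proof. by rewrite /Fr; move: (_^-1) => r; congr (_ + _); field. Qed.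

Lemma r_facts (R : rcfType) (d1 d2 : nat) : (2 <= d1)%N -> (2 <= d2)%N ->
  let r := (((d1 * d2)%N.-1)%:R : R)^-1 in
  let r1 := ((d1.-1)%:R : R)^-1 in
  [/\ 0 <= r, r <= r1 & r1 <= 1].
Proof.
move=> h1 h2 /=.
have p1 : (0 : R) < (d1.-1)%:R by rewrite ltr0n; case: d1 h1 => [|[]].
have hle : (d1.-1 <= (d1 * d2).-1)%N.
  case: d1 h1 {p1} => // d1' _; case: d2 h2 => // d2' _.
  by rewrite mulSn /=; lia.
have p : (0 : R) < ((d1 * d2).-1)%:R by apply: lt_le_trans p1 _; rewrite ler_nat.
split.
- by rewrite invr_ge0 ltW.
- by rewrite lef_pV2 ?posrE // ler_nat.
- by rewrite invf_le1 // ler1n; case: d1 h1 {p1 hle p} => [|[]].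
Qed.

Lemma real_main (R : rcfType) (d1 d2 : nat) (a1 a2 p1 p2 q1 q2 : R) :
  (2 <= d1)%N -> (2 <= d2)%N ->
  0 <= a1 -> 0 <= a2 -> 0 <= p1 <= 1 -> 0 <= q1 <= 1 -> 0 <= p2 <= 1 -> 0 <= q2 <= 1 ->
  a1 ^+ 2 <= p1 * q1 -> a2 ^+ 2 <= p2 * q2 ->
  Fr d1 a1 p1 q1 * Fr d2 a2 p2 q2 <= Fr (d1 * d2) (a1 * a2) (p1 * p2) (q1 * q2).
Proof.
move=> hd1 hd2 ha1 ha2 hp1 hq1 hp2 hq2 h1 h2.
rewrite !Fr_form.
have [r0 rr1 r11] := r_facts R hd1 hd2.
have [_ rr2 r21] := r_facts R hd2 hd1.
rewrite mulnC in rr2 r0.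
apply: final_step.
- rewrite divr_ge0 //; lra.
- rewrite ler_pM2r //; lra.
- rewrite ler_pM2r //; lra.
- rewrite ler_pdivrMr //; lra.
- rewrite ler_pdivrMr //; lra.
- by have [_ ->] := G_bounds ha1 hp1 hq1 h1.
- by have [_ ->] := G_bounds ha2 hp2 hq2 h2.
- exact: super_mult.
Qed.


Lemma adjmxE {C : numClosedFieldType} m n (A : 'M[C]_(m, n)) : adjmx A = (A ^t* )%sesqui.
Proof. by []. Qed.

Lemma adjmxM {C : numClosedFieldType} m n p (A : 'M[C]_(m, n)) (B : 'M[C]_(n, p)) :
  adjmx (A *m B) = adjmx B *m adjmx A.
Proof. by rewrite /adjmx trmx_mul map_mxM. Qed.

Lemma adjmxK {C : numClosedFieldType} m n (A : 'M[C]_(m, n)) : adjmx (adjmx A) = A.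
Proof. by apply/matrixP => i j; rewrite !mxE conjCK. Qed.

Lemma psd_diag {C : numClosedFieldType} k n (A : 'M[C]_n) (M : 'M[C]_(k, n)) i :
  psd A -> 0 <= (M *m A *m adjmx M) i i.
Proof.
move=> [_ hA]; have := hA (adjmx (row i M)).
rewrite adjmxK; congr (0 <= _).
rewrite !mxE; apply: eq_bigr => j _; rewrite !mxE; congr (_ * _).
by apply: eq_bigr => l _; rewrite !mxE.
Qed.

Lemma herm_tr_sq {C : numClosedFieldType} n (H : 'M[C]_n) : adjmx H = H -> 0 <= \tr (H *m H).
Proof.
move=> hH; rewrite -{2}hH /mxtrace; apply: sumr_ge0 => i _.
rewrite !mxE; apply: sumr_ge0 => j _; rewrite !mxE.
exact: mul_conjC_ge0.
Qed.


Lemma le_sum_term {C : numClosedFieldType} n (F : 'I_n -> C) k : (forall j, 0 <= F j) -> F k <= \sum_j F j.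
Proof.
move=> h; rewrite (bigD1 k) //= lerDl; exact: sumr_ge0.
Qed.

Lemma tr_conj {C : numClosedFieldType} n (M A : 'M[C]_n) : adjmx M *m M = 1%:M ->
  \tr (M *m A *m adjmx M) = \tr A.
Proof. by move=> h; rewrite mxtrace_mulC mulmxA h mul1mx. Qed.

Lemma psd_tr {C : numClosedFieldType} n (A B : 'M[C]_n) : psd A -> psd B ->
  0 <= \tr (A *m B) /\ \tr (A *m B) <= \tr A * \tr B.
Proof.
move=> hA hB; have hBh : adjmx B = B by case: hB.
have nB : B \is normalmx by apply/normalmxP; rewrite -adjmxE hBh.
have /orthomx_spectralP eB := nB.
set P := spectralmx B in eB; set D := spectral_diag B in eB.
have Pu : P \is unitarymx := spectral_unitarymx B.
have Pi : invmx P = adjmx P by rewrite invmx_unitary.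
have PP : P *m adjmx P = 1%:M by apply/unitarymxP.
have PP' : adjmx P *m P = 1%:M by rewrite -Pi mulVmx // spectral_unit.
have eD : P *m B *m adjmx P = diag_mx D.
  by rewrite eB Pi !mulmxA PP mul1mx -mulmxA PP mulmx1.
have etr : \tr (A *m B) = \sum_k (P *m A *m adjmx P) k k * D 0 k.
  rewrite eB Pi mulmxA mxtrace_mulC !mulmxA /mxtrace.
  by apply: eq_bigr => k _; rewrite mul_mx_diag mxE.
have hc k : 0 <= (P *m A *m adjmx P) k k by apply: psd_diag.
have he k : 0 <= D 0 k.
  by have := @psd_diag _ _ _ B P k hB; rewrite eD mxE eqxx mulr1n.
have trA : \tr A = \sum_k (P *m A *m adjmx P) k k by rewrite -(tr_conj A PP').
have trB : \tr B = \sum_k D 0 k.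
  rewrite -(tr_conj B PP') eD /mxtrace; apply: eq_bigr => k _.
  by rewrite mxE eqxx mulr1n.
rewrite etr; split; first by apply: sumr_ge0 => k _; rewrite mulr_ge0.
rewrite trA trB mulr_suml; apply: ler_sum => k _.
by rewrite ler_wpM2l //; exact: (@le_sum_term _ n (fun j => D 0 j) k he).
Qed.

Lemma adjmx_lin {C : numClosedFieldType} n (x y : C) (A B : 'M[C]_n) : Num.conj x = x -> Num.conj y = y ->
  adjmx A = A -> adjmx B = B -> adjmx (x *: A + y *: B) = x *: A + y *: B.
Proof.
move=> hx hy hA hB; rewrite -{2}hA -{2}hB.
by apply/matrixP => i j; rewrite !mxE rmorphD !rmorphM /= hx hy.
Qed.

Lemma cs_form {C : numClosedFieldType} n (x y : C) (A B : 'M[C]_n) : Num.conj x = x -> Num.conj y = y ->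
  adjmx A = A -> adjmx B = B ->
  0 <= x ^+ 2 * \tr (A *m A) + 2%:R * x * y * \tr (A *m B) + y ^+ 2 * \tr (B *m B).
Proof.
move=> hx hy hA hB; have := herm_tr_sq (adjmx_lin hx hy hA hB).
rewrite mulmxDl !mulmxDr -!scalemxAl -!scalemxAr !mxtraceD !mxtraceZ.
rewrite (mxtrace_mulC B A); move: (\tr (A *m A)) (\tr (A *m B)) (\tr (B *m B)) => a b c.
rewrite /GRing.scale /=.
suff -> : x ^+ 2 * a + 2%:R * x * y * b + y ^+ 2 * c = x * (x * a) + x * (y * b) + (y * (x * b) + y * (y * c)) by [].
by ring.
Qed.

Lemma tr_tens {C : numClosedFieldType} m n (A : 'M[C]_m) (B : 'M[C]_n) : \tr (tensmx A B) = \tr A * \tr B.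
Proof.
rewrite /mxtrace mulr_sum; apply: eq_bigr => k _; by rewrite !mxE.
Qed.



Local Open Scope complex_scope.

Lemma real_of (R : rcfType) (z : R[i]) : 0 <= z -> z = (complex.Re z)%:C.
Proof. by case: z => a b; rewrite lecE /= => /andP[/eqP -> _]. Qed.

Lemma conj_real (R : rcfType) (x : R) : Num.conj (x%:C) = x%:C.
Proof. by apply/eqP; rewrite eq_complex /= oppr0 !eqxx. Qed.

Lemma real_cs (R : rcfType) (A P Q : R) :
  (forall x y : R, 0 <= x ^+ 2 * P + 2%:R * x * y * A + y ^+ 2 * Q) ->
  0 <= P -> 0 <= Q -> A ^+ 2 <= P * Q.
Proof.
move=> h hP hQ; have [Q0|Qp] := eqVneq Q 0.
  have := h A (- (P + 1)); rewrite Q0; nra.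
have Qp' : 0 < Q by rewrite lt_def Qp.
have := h Q (- A); nra.
Qed.

Lemma pair_facts (R : rcfType) n (rho sigma : 'M[R[i]]_n) :
  density rho -> density sigma ->
  exists A P Q : R, [/\ \tr (rho *m sigma) = A%:C, \tr (rho *m rho) = P%:C,
    \tr (sigma *m sigma) = Q%:C & [/\ 0 <= A, 0 <= P <= 1, 0 <= Q <= 1 & A ^+ 2 <= P * Q]].
Proof.
move=> [hr tr1] [hs ts1].
have hrh : adjmx rho = rho by case: hr.
have hsh : adjmx sigma = sigma by case: hs.
have [ha _] := psd_tr hr hs.
have [_ hp1] := psd_tr hr hr.
have [_ hq1] := psd_tr hs hs.
have hp := herm_tr_sq hrh.
have hq := herm_tr_sq hsh.
rewrite tr1 mulr1 in hp1; rewrite ts1 mulr1 in hq1.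
move: ha hp hq hp1 hq1.
have cs (x y : R) := cs_form (conj_real x) (conj_real y) hrh hsh.
move: cs.
move: (\tr (rho *m sigma)) (\tr (rho *m rho)) (\tr (sigma *m sigma)) => a p q cs ha hp hq hp1 hq1.
have ea := real_of ha; have ep := real_of hp; have eq := real_of hq.
move: (complex.Re a) (complex.Re p) (complex.Re q) ea ep eq => A P Q ea ep eq.
rewrite ea ep eq in cs ha hp hq hp1 hq1 *.
exists A, P, Q; split => //.
rewrite !ler0c -(rmorph1 (real_complex R)) !lecR in ha hp hq hp1 hq1.
rewrite ha hp hq hp1 hq1; split => //.
apply: real_cs => // x y; have := cs x y.
by rewrite -ler0c !(rmorphD, rmorphM, rmorphXn, rmorph_nat).
Qed.

Lemma Fc_real (R : rcfType) d (A P Q : R) : 0 <= P <= 1 -> 0 <= Q <= 1 ->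
  (1 - ((d.-1)%:R : R[i])^-1) / 2%:R + (1 + ((d.-1)%:R : R[i])^-1) / 2%:R *
    (A%:C + sqrtC (1 - P%:C) * sqrtC (1 - Q%:C)) = (Fr d A P Q)%:C.
Proof.
have sq (X : R) : 0 <= X <= 1 -> sqrtC (1 - X%:C) = (Num.sqrt (1 - X))%:C.
  move=> /andP[_ h1].
  have -> : 1 - X%:C = ((Num.sqrt (1 - X))%:C) ^+ 2.
    by rewrite -rmorphXn sqr_sqrtr ?subr_ge0 // rmorphB rmorph1.
  by rewrite sqrCK // ler0c sqrtr_ge0.
move=> hP hQ; rewrite (sq _ hP) (sq _ hQ) /Fr.
rewrite !(rmorph_nat, fmorphV, rmorphB, rmorphN, rmorphM, rmorphD, rmorph1); reflexivity.
Qed.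

Theorem theorem5 (R : rcfType) (d1 d2 : nat) (hd1 : (2 <= d1)%N) (hd2 : (2 <= d2)%N)
  (rho1 sigma1 : 'M[R[i]]_d1) (rho2 sigma2 : 'M[R[i]]_d2) :
  density rho1 -> density sigma1 -> density rho2 -> density sigma2 ->
  fidC rho1 sigma1 * fidC rho2 sigma2
    <= fidC (tensmx rho1 rho2) (tensmx sigma1 sigma2).
Proof.
move=> hr1 hs1 hr2 hs2.
have [A1 [P1 [Q1 [ea1 ep1 eq1 [ha1 hp1 hq1 hc1]]]]] := pair_facts hr1 hs1.
have [A2 [P2 [Q2 [ea2 ep2 eq2 [ha2 hp2 hq2 hc2]]]]] := pair_facts hr2 hs2.
have E1 : fidC rho1 sigma1 = (Fr d1 A1 P1 Q1)%:C.
  by rewrite /fidC ea1 ep1 eq1; exact: Fc_real.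
have E2 : fidC rho2 sigma2 = (Fr d2 A2 P2 Q2)%:C.
  by rewrite /fidC ea2 ep2 eq2; exact: Fc_real.
have hP : 0 <= P1 * P2 <= 1.
  move: hp1 hp2 => /andP[? ?] /andP[? ?]; apply/andP; split; nra.
have hQ : 0 <= Q1 * Q2 <= 1.
  move: hq1 hq2 => /andP[? ?] /andP[? ?]; apply/andP; split; nra.
have E : fidC (tensmx rho1 rho2) (tensmx sigma1 sigma2)
    = (Fr (d1 * d2) (A1 * A2) (P1 * P2) (Q1 * Q2))%:C.
  rewrite /fidC !tensmx_mul !tr_tens ea1 ep1 eq1 ea2 ep2 eq2 -!rmorphM.
  exact: Fc_real.
rewrite E1 E2 E -rmorphM lecR.
exact: real_main.
Qed.
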